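(* Let $G$ be a finite simple graph with a perfect matching $M$, let $\mathcal{C}$ be an optimal edge $2$-colouring of $G$, and let $\mathcal{F}$, $P$ and the sets $P_j$ ($j\in\mathcal{C}_M$) be as in the context. If $(u,v)\in P_i$ and $(z,w)\in P_j$ for some distinct $i,j\in\mathcal{C}_M$, then the paths $u\mathcal{F}v$ and $z\mathcal{F}w$ do not share an internal vertex.
   Context: $G\setminus M$ is the spanning subgraph with edge set $E(G)\setminus M$, with connected components $C_1,\dots,C_h$. An edge $2$-colouring assigns colours to edges (not necessarily properly) so that each vertex sees at most $2$ distinct colours; optimal means maximum number of colours. $\mathrm{mcl}(u)$ is the colour of the $M$-edge at $u$; $\mathcal{C}_M$ is the set of colours used on $M$ and $\mathcal{C}_N$ the other colours. For a colour $i$, $G[i]$ is the subgraph spanned by edges of colour $i$; for $i\in\mathcal{C}_N$ it is a non-matching colour component, and $k_m$ is the number of non-matching colour components contained in $C_m$. Forests: rooted trees, $r(F)$ roots, $l(F)$ leaves (non-root vertices with no children); each tree has a depth-first indexing $\mathrm{dfs}_T$ (descendants get larger indices) and order $u\preceq_T v$ iff $\mathrm{dfs}_T(u)\ge\mathrm{dfs}_T(v)$; vertices of different trees of a forest are incomparable. $(T_1,T_2)$ is a cascading pair if they are vertex-disjoint or $r(T_2)\in l(T_1)$ and $|V(T_1)\cap V(T_2)|=1$; $\mathcal{F}=\{F_1,\dots,F_l\}$ is a cascading sequence of forests if $V(F_i)\cap V(F_j)=\emptyset$ for $|i-j|\ge2$ and every tree of $F_i$ with every tree of $F_{i+1}$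 forms a cascading pair. $V(\mathcal{F})=\bigcup_F V(F)$; $\mathrm{Int}(\mathcal{F})$ is the set of vertices that are neither a root nor a leaf of some $F\in\mathcal{F}$ containing them. $\preceq_{\mathcal{F}}$ is the transitive closure of ''$x\preceq_F y$ for some $F\in\mathcal{F}$''; $x\mathcal{F}y$ is the path $xFy$ in the forest $F\in\mathcal{F}$ containing an $x$–$y$ path; internal vertices of a path are those other than its endpoints. Standing data: $\mathcal{F}$ is a cascading sequence of forests in $G\setminus M$ with $\sum_F|l(F)|=\sum_{m=1}^h(k_m-1)$, $\mathrm{Int}(\mathcal{F})\cap V(H)=\emptyset$ for every non-matching colour component $H$, and for each $F\in\mathcal{F}$, $u\in r(F)\cup l(F)$, every edge of $F$ at $u$ has colour $\mathrm{mcl}(u)$. $P=\{(u_i,v_i)\}$ is a set of $\sum_m(k_m-1)$ pairs of vertices of $V(\mathcal{F})$ with: (a) the $u_i$ pairwise distinct; (b) $u_i\prec_{\mathcal{F}}v_i$ and $u_i\mathcal{F}v_i$ exists; (c) $\mathrm{mcl}(u_i)=\mathrm{mcl}(v_i)$; (d) $u_i\mathcal{F}v_i$ monochromatic of colour $\mathrm{mcl}(u_i)$; (e) every internal vertex $z$ of $u_i\mathcal{F}v_i$ has $\mathrm{mcl}(z)\ne\mathrm{mcl}(u_i)$; (f) for $i\ne j$ with $u_iv_i,u_jv_j\in M$, the paths $u_i\mathcal{F}v_i$, $u_j\mathcal{F}v_j$ share no internal vertex. For $j\in\mathcal{C}_M$, $P_j=\{(u,v)\in P:\mathrm{mcl}(u)=\mathrm{mcl}(v)=j\}$.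 *)

(* Defs.v *)
From mathcomp Require Import all_boot all_order all_algebra.
From Stdlib Require List.
Set Implicit Arguments. Unset Strict Implicit. Unset Printing Implicit Defensive.
Import GRing.Theory.

(* A finite simple graph on the finite vertex type T is given by its edge
   set E : {set {set T}}, every edge being a 2-element set of vertices.
   An edge colouring is any map c : {set T} -> nat (only its values on E
   matter); colours are natural numbers. *)

Definition simple_graph (T : finType) (E : {set {set T}}) : Prop :=
  forall e, e \in E -> #|e| = 2.

Definition perfect_matching (T : finType) (E M : {set {set T}}) : Prop :=
  M \subset E /\ forall x : T, #|[set e in M | x \in e]| = 1.

Definition colours_at (T : finType) (E : {set {set T}}) (c : {set T} -> nat) (x : T)
  : list nat := undup (map c (filter (fun e : {set T} => x \in e) (enum E))).

Definition edge_2_colouring (T : finType) (E : {set {set T}}) (c : {set T} -> nat)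
  : Prop := forall x : T, size (colours_at E c x) <= 2.

Definition colours (T : finType) (E : {set {set T}}) (c : {set T} -> nat) : list nat :=
  undup (map c (enum E)).

Definition ncolours (T : finType) (E : {set {set T}}) (c : {set T} -> nat) : nat :=
  size (colours E c).

Definition optimal_2_colouring (T : finType) (E : {set {set T}}) (c : {set T} -> nat)
  : Prop :=
  edge_2_colouring E c /\
  forall c' : {set T} -> nat, edge_2_colouring E c' -> ncolours E c' <= ncolours E c.

Definition mcl (T : finType) (M : {set {set T}}) (c : {set T} -> nat) (u : T) : nat :=
  match [pick e in M | u \in e] with Some e => c e | None => 0 end.

Definition CM (T : finType) (M : {set {set T}}) (c : {set T} -> nat) : list nat :=
  colours M c.
Definition CN (T : finType) (E M : {set {set T}}) (c : {set T} -> nat) : list nat :=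
  filter (fun i => i \notin CM M c) (colours E c).

Definition colV (T : finType) (E : {set {set T}}) (c : {set T} -> nat) (i : nat)
  : {set T} := [set x | [exists e in E, (c e == i) && (x \in e)]].

Definition adjGM (T : finType) (E M : {set {set T}}) : rel T :=
  fun x y => [set x; y] \in E :\: M.

Definition compsGM (T : finType) (E M : {set {set T}}) : {set {set T}} :=
  [set [set y | connect (adjGM E M) x y] | x : T].

Definition kcomp (T : finType) (E M : {set {set T}}) (c : {set T} -> nat) (C : {set T})
  : nat := count (fun i => colV E c i \subset C) (CN E M c).

Definition sum_k_minus_1 (T : finType) (E M : {set {set T}}) (c : {set T} -> nat) : int :=
  (\sum_(C in compsGM E M) (Posz (kcomp E M c C) - 1))%R.

(* A rooted forest: vertex set, parent function (None for roots), and the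
   depth-first indexing of its trees. *)
Record forest (T : finType) := Forest {
  fV : {set T};
  fpar : T -> option T;
  fdfs : T -> nat }.

Definition dummy_forest (T : finType) : forest T :=
  Forest set0 (fun _ => None) (fun _ => 0).

Fixpoint piter (T : Type) (par : T -> option T) (n : nat) (x : T) : option T :=
  match n with
  | 0 => Some x
  | n'.+1 => match piter par n' x with Some y => par y | None => None end
  end.

Definition anc (T : finType) (F : forest T) (x : T) : {set T} :=
  [set y | [exists n : 'I_#|T|.+1, piter (fpar F) n x == Some y]].

Definition desc (T : finType) (F : forest T) (x : T) : {set T} :=
  [set y in fV F | x \in anc F y].

Definition isroot (T : finType) (F : forest T) (x : T) : bool :=
  (x \in fV F) && (fpar F x == None).

Definition isleaf (T : finType) (F : forest T) (x : T) : bool :=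
  [&& x \in fV F, fpar F x != None &
      [forall y, (y \in fV F) ==> (fpar F y != Some x)]].

Definition sametree (T : finType) (F : forest T) (x y : T) : bool :=
  [&& x \in fV F, y \in fV F &
      [exists r, [&& isroot F r, r \in anc F x & r \in anc F y]]].

Definition treeV (T : finType) (F : forest T) (r : T) : {set T} :=
  [set x in fV F | r \in anc F x].

(* F is a rooted forest in G \ M with a depth-first (preorder) indexing of
   each of its trees *)
Definition forest_in_GM (T : finType) (E M : {set {set T}}) (F : forest T) : Prop :=
  [/\ (forall x p, x \in fV F -> fpar F x = Some p ->
          p \in fV F /\ [set x; p] \in E :\: M),
      (forall x, x \in fV F -> exists2 r, r \in anc F x & fpar F r = None),
      (forall x y, sametree F x y -> fdfs F x = fdfs F y -> x = y) &
      (forall x, x \in fV F ->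
         desc F x = [set y in fV F | sametree F x y &&
                      (fdfs F x <= fdfs F y < fdfs F x + #|desc F x|)])].

Definition leF (T : finType) (F : forest T) (x y : T) : bool :=
  sametree F x y && (fdfs F y <= fdfs F x).

Definition cascading_pair (T : finType) (F1 F2 : forest T) (r1 r2 : T) : bool :=
  [disjoint treeV F1 r1 & treeV F2 r2] ||
  [&& r2 \in treeV F1 r1, isleaf F1 r2 & #|treeV F1 r1 :&: treeV F2 r2| == 1].

Definition cascading_seq (T : finType) (Fs : seq (forest T)) : Prop :=
  (forall i j, i < size Fs -> j < size Fs -> i.+2 <= j ->
     [disjoint fV (nth (dummy_forest T) Fs i) & fV (nth (dummy_forest T) Fs j)]) /\
  (forall i r1 r2, i.+1 < size Fs ->
     isroot (nth (dummy_forest T) Fs i) r1 ->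
     isroot (nth (dummy_forest T) Fs i.+1) r2 ->
     cascading_pair (nth (dummy_forest T) Fs i) (nth (dummy_forest T) Fs i.+1) r1 r2).

Definition VFs (T : finType) (Fs : seq (forest T)) : {set T} :=
  [set x | has (fun F => x \in fV F) Fs].

Definition IntFs (T : finType) (Fs : seq (forest T)) : {set T} :=
  [set x in VFs Fs | ~~ has (fun F => isroot F x || isleaf F x) Fs].

Definition leFs (T : finType) (Fs : seq (forest T)) (x y : T) : bool :=
  connect (fun a b => has (fun F => leF F a b) Fs) x y.

Definition ltFs (T : finType) (Fs : seq (forest T)) (x y : T) : bool :=
  leFs Fs x y && (x != y).

Definition onpath (T : finType) (F : forest T) (x y z : T) : bool :=
  (z \in anc F x :|: anc F y) && (anc F x :&: anc F y \subset anc F z).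

Definition internal (T : finType) (F : forest T) (x y z : T) : bool :=
  [&& onpath F x y z, z != x & z != y].

Definition mono_path (T : finType) (c : {set T} -> nat) (F : forest T) (x y : T) (i : nat)
  : Prop :=
  forall a b, onpath F x y a -> fpar F a = Some b -> onpath F x y b -> c [set a; b] = i.

Definition path_exists (T : finType) (Fs : seq (forest T)) (x y : T) : Prop :=
  exists2 F, List.In F Fs & sametree F x y.

Definition no_common_internal (T : finType) (Fs : seq (forest T)) (x y z w : T) : Prop :=
  forall F F', List.In F Fs -> List.In F' Fs -> sametree F x y -> sametree F' z w ->
  forall a, internal F x y a -> internal F' z w a -> False.

Definition standing_forests (T : finType) (E M : {set {set T}}) (c : {set T} -> nat)
  (Fs : seq (forest T)) : Prop :=
  [/\ (forall F, List.In F Fs -> forest_in_GM E M F),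
      cascading_seq Fs,
      Posz (\sum_(F <- Fs) #|[set x | isleaf F x]|) = sum_k_minus_1 E M c,
      (forall i, i \in CN E M c -> IntFs Fs :&: colV E c i = set0) &
      (forall F u, List.In F Fs -> isroot F u || isleaf F u ->
         (forall p, fpar F u = Some p -> c [set u; p] = mcl M c u) /\
         (forall y, y \in fV F -> fpar F y = Some u -> c [set y; u] = mcl M c u))].

Definition standing_pairs (T : finType) (E M : {set {set T}}) (c : {set T} -> nat)
  (Fs : seq (forest T)) (P : {set T * T}) : Prop :=
  [/\ Posz #|P| = sum_k_minus_1 E M c,
      (forall p, p \in P -> p.1 \in VFs Fs /\ p.2 \in VFs Fs),
      (forall p q, p \in P -> q \in P -> p.1 = q.1 -> p = q),
      (forall p, p \in P -> ltFs Fs p.1 p.2 /\ path_exists Fs p.1 p.2) &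
    [/\ (forall p, p \in P -> mcl M c p.1 = mcl M c p.2),
      (forall p F, p \in P -> List.In F Fs -> sametree F p.1 p.2 ->
                   mono_path c F p.1 p.2 (mcl M c p.1)),
      (* (e) *) (forall p F z, p \in P -> List.In F Fs -> sametree F p.1 p.2 ->
                   internal F p.1 p.2 z -> mcl M c z != mcl M c p.1) &
      (forall p q, p \in P -> q \in P -> p != q ->
                   [set p.1; p.2] \in M -> [set q.1; q.2] \in M ->
                   no_common_internal Fs p.1 p.2 q.1 q.2)]].

Definition Pj (T : finType) (M : {set {set T}}) (c : {set T} -> nat) (P : {set T * T})
  (j : nat) : {set T * T} :=
  [set p in P | (mcl M c p.1 == j) && (mcl M c p.2 == j)].

(* Main.v *)
Require Import Defs.
From mathcomp Require Import all_boot all_order all_algebra.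
From mathcomp Require Import zify.

Section Aux.
Variable T : finType.

Lemma piter_add (par : T -> option T) m n x :
  piter par (m + n) x = match piter par n x with Some y => piter par m y | None => None end.
Proof.
elim: m => [|m IH] /=; first by case: (piter par n x).
rewrite IH; by case: (piter par n x).
Qed.

Lemma piter_none (par : T -> option T) m k x :
  piter par m x = None -> piter par (k + m) x = None.
Proof. by rewrite piter_add => ->. Qed.

Lemma piter_some (par : T -> option T) i n x y :
  i <= n -> piter par n x = Some y -> exists t, piter par i x = Some t.
Proof.
move=> le; case E: (piter par i x) => [t|]; first by exists t.
by rewrite -(subnK le) piter_none.
Qed.

Lemma piter_short (par : T -> option T) n x y :
  piter par n x = Some y -> exists k, k < #|T| /\ piter par k x = Some y.
Proof.
elim/ltn_ind: n => n IH H.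
case: (ltnP n #|T|) => [lt|ge]; first by exists n.
pose f := fun i : 'I_#|T|.+1 => odflt x (piter par i x).
have : ~~ injectiveb f.
  apply/negP => /injectiveP inj; have := leq_card f inj.
  by rewrite card_ord ltnn.
move/injectivePn => [i [j neq fij]].
have Hs : forall k : 'I_#|T|.+1, piter par k x = Some (f k).
  move=> k; have [t Ht] := @piter_some par k n x y (leq_trans (ltn_ord k : k <= #|T|) ge) H.
  by rewrite /f Ht.
wlog lt: i j neq fij / i < j.
  move=> W; case: (ltngtP i j) => h; first exact: (W i j).
  - by apply: (W j i) => //; rewrite eq_sym.
  - by move: neq; rewrite -(inj_eq val_inj) /= h eqxx.
have jn : j <= n by apply: leq_trans ge; rewrite -ltnS.
apply: (IH (n - j + i)); last first.
  by rewrite piter_add Hs fij -H -[in RHS](subnK jn) piter_add Hs.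
lia.
Qed.

Lemma ancE (F : forest T) x y :
  y \in anc F x <-> exists n, piter (fpar F) n x = Some y.
Proof.
split.
  by rewrite inE => /existsP [n /eqP H]; exists n.
move=> [n /piter_short [k [lt H]]]; rewrite inE; apply/existsP.
by exists (Ordinal (ltnW lt : k < #|T|.+1)); rewrite /= H.
Qed.

Lemma anc_fV (E M : {set {set T}}) (F : forest T) x y :
  forest_in_GM E M F -> x \in fV F -> y \in anc F x -> y \in fV F.
Proof.
case=> H1 _ _ _ xV /ancE [n]; elim: n y => [|n IH] y /=; first by case=> <-.
case E': (piter (fpar F) n x) => [t|] // Hp.
by have [] := H1 t y (IH t E') Hp.
Qed.

Lemma child (F : forest T) x a :
  a \in anc F x -> a != x ->
  exists ch, [/\ ch \in anc F x, fpar F ch = Some a & anc F a \subset anc F ch].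
Proof.
move=> /ancE [[|n] /=]; first by case=> ->; rewrite eqxx.
case E': (piter (fpar F) n x) => [ch|] // Hp _.
exists ch; split => //; first by apply/ancE; exists n.
apply/subsetP => y /ancE [m Hm]; apply/ancE; exists (m + 1).
by rewrite piter_add /= Hp.
Qed.

Lemma edge_at (E M : {set {set T}}) (c : {set T} -> nat) (F : forest T) u v a i :
  forest_in_GM E M F -> sametree F u v -> internal F u v a ->
  Defs.mono_path c F u v i ->
  exists2 e, e \in E & (a \in e) && (c e == i).
Proof.
move=> HF /and3P [uV vV _] /and3P [/andP [aUV sub] au av] mono.
have key : forall x, x \in fV F -> a \in anc F x -> a != x ->
    anc F x \subset anc F u :|: anc F v ->
    exists2 e, e \in E & (a \in e) && (c e == i).
  move=> x xV ax ax' sx.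
  have [ch [chx pch sch]] := @child F x a ax ax'.
  have chV := @anc_fV E M F x ch HF xV chx.
  case: (HF) => H1 _ _ _; have [_] := H1 ch a chV pch.
  rewrite inE => /andP [_ chE].
  exists [set ch; a] => //; rewrite !inE eqxx orbT /=.
  apply/eqP; apply: mono pch _ => //; last by apply/andP.
  apply/andP; split; first by apply: (subsetP sx).
  exact: subset_trans sub sch.
move: aUV; rewrite inE => /orP [] ax.
  apply: (key u) => //; exact: subsetUl.
apply: (key v) => //; exact: subsetUr.
Qed.

End Aux.

Theorem lemma10 (T : finType) (E M : {set {set T}}) (c : {set T} -> nat)
  (Fs : seq (forest T)) (P : {set T * T}) :
  simple_graph E ->
  perfect_matching E M ->
  optimal_2_colouring E c ->
  standing_forests E M c Fs ->
  standing_pairs E M c Fs P ->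
  forall (i j : nat) (u v z w : T),
    i \in CM M c -> j \in CM M c -> i != j ->
    (u, v) \in Pj M c P i -> (z, w) \in Pj M c P j ->
    no_common_internal Fs u v z w.
Proof.
move=> _ [MsubE HM] [H2col _] [HFs _ _ _ _] [_ _ _ _ [_ Hd He _]].
move=> i j u v z w _ _ ij.
rewrite !inE /= => /andP [uvP /andP [/eqP mu _]] /andP [zwP /andP [/eqP mz _]].
move=> F F' FIn F'In stF stF' a intF intF'.
have m1 := Hd (u, v) F uvP FIn stF; rewrite /= mu in m1.
have m2 := Hd (z, w) F' zwP F'In stF'; rewrite /= mz in m2.
have [e1 e1E /andP [ae1 /eqP ce1]] := @edge_at T E M c F u v a i (HFs F FIn) stF intF m1.
have [e2 e2E /andP [ae2 /eqP ce2]] := @edge_at T E M c F' z w a j (HFs F' F'In) stF' intF' m2.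
have ma_i : mcl M c a != i.
  rewrite -mu. exact (He (u, v) F a uvP FIn stF intF).
have ma_j : mcl M c a != j.
  rewrite -mz. exact (He (z, w) F' a zwP F'In stF' intF').
have [e3 e3E [ae3 ce3]] : exists2 e, e \in E & a \in e /\ c e = mcl M c a.
  rewrite /mcl; case: pickP => [e /andP [eM ae] | none].
    by exists e => //; exact: (subsetP MsubE).
  have := HM a; rewrite (eq_card0 (A := [set e in M | a \in e])) //.
  by move=> e; rewrite inE; apply: none.
have inC : forall e k, e \in E -> a \in e -> c e = k -> k \in colours_at E c a.
  move=> e k eE ae <-; rewrite /colours_at mem_undup; apply: map_f.
  by rewrite mem_filter ae mem_enum.
have := H2col a.
have sub : {subset [:: i; j; mcl M c a] <= colours_at E c a}.
  move=> k; rewrite !inE => /or3P [] /eqP ->.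
  - exact: inC e1E ae1 ce1.
  - exact: inC e2E ae2 ce2.
  - exact: inC e3E ae3 ce3.
have uq : uniq [:: i; j; mcl M c a].
  by rewrite /= !inE negb_or ij eq_sym ma_i eq_sym ma_j.
by have := uniq_leq_size uq sub => /= /leq_trans H /H.
Qed.
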